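(* The generating function $$G_{(213,231)}(x,p,q,y,z)=\sum_{n\ge 0}\ \sum_{\pi\in S_n(213,231)} x^n p^{\operatorname{asc}(\pi)} q^{\operatorname{des}(\pi)} y^{\operatorname{MNA}(\pi)} z^{\operatorname{MND}(\pi)}$$ is equal to $$\frac{1 + x + p x^2 y - p^2 x^2 y + q x^2 z - q^2 x^2 z - p q x^2 y z + p q x^3 y z - p^2 q x^3 y z - p q^2 x^3 y z}{1 - p^2 x^2 y - q^2 x^2 z - p q x^2 y z - p^2 q x^3 y z - p q^2 x^3 y z}.$$
   Context: For $n\ge 0$, $S_n$ denotes the set of permutations $\pi=\pi_1\pi_2\cdots\pi_n$ of $[n]=\{1,\dots,n\}$ ($S_0$ consists of the empty permutation, for which all statistics below are $0$). A permutation $\pi\in S_n$ avoids a pattern $\tau\in S_k$ if there are no indices $i_1<\dots<i_k$ such that $\pi_{i_a}<\pi_{i_b}$ if and only if $\tau_a<\tau_b$; $S_n(\tau,\rho)$ is the set of permutations in $S_n$ avoiding both $\tau$ and $\rho$. $\operatorname{asc}(\pi)$ (resp. $\operatorname{des}(\pi)$) is the number of $i\in[n-1]$ with $\pi_i<\pi_{i+1}$ (resp. $\pi_i>\pi_{i+1}$). $\operatorname{MNA}(\pi)$ is the maximum size of a set $I\subseteq[n-1]$ such that $\pi_i<\pi_{i+1}$ for all $i\in I$ and $|i-j|\ge 2$ for distinct $i,j\in I$; $\operatorname{MND}(\pi)$ is defined analogously with $\pi_i>\pi_{i+1}$. *)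

(* Defs.v *)
From mathcomp Require Import all_boot all_order all_algebra all_fingroup.
Set Implicit Arguments. Unset Strict Implicit. Unset Printing Implicit Defensive.
Import GRing.Theory.

(* One-line notation of pi in S_n, with values shifted to 0..n-1
   (order-isomorphic to the usual 1..n). *)
Definition word n (pi : 'S_n) : seq nat := [seq val (pi i) | i <- enum 'I_n].

Definition contains n (pi : 'S_n) (tau : seq nat) : bool :=
  [exists f : {ffun 'I_(size tau) -> 'I_n},
     [forall a : 'I_(size tau), forall b : 'I_(size tau),
        ((a < b) ==> (f a < f b)) &&
        ((pi (f a) < pi (f b)) == (nth 0 tau a < nth 0 tau b))]].

Definition avoids n (pi : 'S_n) (tau : seq nat) : bool := ~~ contains pi tau.

(* position i (0-based, i < n-1) is an ascent / descent *)
Definition is_asc n (pi : 'S_n) (i : nat) : bool :=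
  (i.+1 < n) && (nth 0 (word pi) i < nth 0 (word pi) i.+1).
Definition is_des n (pi : 'S_n) (i : nat) : bool :=
  (i.+1 < n) && (nth 0 (word pi) i > nth 0 (word pi) i.+1).

Definition asc n (pi : 'S_n) : nat := count (is_asc pi) (iota 0 n.-1).
Definition des n (pi : 'S_n) : nat := count (is_des pi) (iota 0 n.-1).

Definition nonadj_ok n (P : nat -> bool) (I : {set 'I_n}) : bool :=
  [forall i in I, P (val i)] &&
  [forall i in I, forall j in I, val j != (val i).+1].

Definition MNA n (pi : 'S_n) : nat :=
  \max_(I : {set 'I_n} | nonadj_ok (is_asc pi) I) #|I|.
Definition MND n (pi : 'S_n) : nat :=
  \max_(I : {set 'I_n} | nonadj_ok (is_des pi) I) #|I|.

Local Open Scope ring_scope.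

(* coefficient of x^n in G_{(213,231)}(x,p,q,y,z) *)
Definition Gcoef (R : comNzRingType) (p q y z : R) (n : nat) : R :=
  \sum_(pi : 'S_n | avoids pi [:: 2; 1; 3]%N && avoids pi [:: 2; 3; 1]%N)
     p ^+ asc pi * q ^+ des pi * y ^+ MNA pi * z ^+ MND pi.

(* numerator and denominator, as polynomials in x *)
Definition Gnum (R : comNzRingType) (p q y z : R) : {poly R} :=
  1 + 'X
  + (p * y - p ^+ 2 * y + q * z - q ^+ 2 * z - p * q * y * z)%:P * 'X ^+ 2
  + (p * q * y * z - p ^+ 2 * q * y * z - p * q ^+ 2 * y * z)%:P * 'X ^+ 3.

Definition Gden (R : comNzRingType) (p q y z : R) : {poly R} :=
  1 - (p ^+ 2 * y + q ^+ 2 * z + p * q * y * z)%:P * 'X ^+ 2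
    - (p ^+ 2 * q * y * z + p * q ^+ 2 * y * z)%:P * 'X ^+ 3.

(* Main.v *)
Require Import Defs.
From mathcomp Require Import all_boot all_order all_algebra all_fingroup.
From mathcomp Require Import zify.
Set Implicit Arguments. Unset Strict Implicit. Unset Printing Implicit Defensive.
From mathcomp Require Import ring.
Import GRing.Theory.

Fixpoint incf (P : nat -> bool) (k : nat) : bool :=
  P k && (if k is k'.+1 then ~~ incf P k' else true).

Lemma incf_P P k : incf P k -> P k.
Proof. by case: k => [|k] /= /andP[]. Qed.

Lemma incf_ext P Q k : (forall j, j <= k -> P j = Q j) -> incf P k = incf Q k.
Proof.
elim: k => [|k IH] H /=; first by rewrite H.
by rewrite H // IH // => j hj; apply: H; apply: leq_trans hj _.
Qed.

Lemma nonadj_okP n (P : nat -> bool) (I : {set 'I_n}) :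
  reflect ((forall i, i \in I -> P (val i)) /\
           (forall i j, i \in I -> j \in I -> val j != (val i).+1))
          (nonadj_ok P I).
Proof.
apply: (iffP andP).
  case=> /forall_inP H1 /forall_inP H2; split => // i j hi hj.
  by move: (H2 i hi) => /forall_inP; apply.
case=> H1 H2; split; apply/forall_inP => // i hi.
by apply/forall_inP => j hj; apply: H2.
Qed.

Definition Fk n (P : nat -> bool) k :=
  \max_(I : {set 'I_n} | nonadj_ok P I && [forall i in I, val i < k]) #|I|.

Lemma Fk_mono n P k1 k2 : k1 <= k2 -> Fk n P k1 <= Fk n P k2.
Proof.
move=> hk; apply/bigmax_leqP => I /andP[h1 /forall_inP h2].
apply: leq_bigmax_cond; rewrite h1 /=; apply/forall_inP => i /h2 hi.
exact: leq_trans hi hk.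
Qed.

Lemma Fk0 n P : Fk n P 0 = 0.
Proof.
apply/eqP; rewrite -leqn0; apply/bigmax_leqP => I /andP[_ /forall_inP h].
rewrite leqn0 cards_eq0; apply/eqP/setP => i; rewrite inE.
by apply/negP => /h.
Qed.

Lemma Fk_step n P k (hk : k < n) :
  Fk n P k.+1 = if P k then maxn (Fk n P k) (Fk n P k.-1).+1 else Fk n P k.
Proof.
set o := Ordinal hk.
apply/eqP; rewrite eqn_leq; apply/andP; split.
  apply/bigmax_leqP => I /andP[/nonadj_okP [HP HA] /forall_inP HB].
  case: (boolP (o \in I)) => Hin.
    have Pk : P k := HP _ Hin. rewrite Pk.
    have : #|I :\ o| <= Fk n P k.-1.
      apply: leq_bigmax_cond; apply/andP; split.
        apply/nonadj_okP; split.
          by move=> i; rewrite !inE => /andP[_ /HP].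
        by move=> i j; rewrite !inE => /andP[_ hi] /andP[_ hj]; apply: HA.
      apply/forall_inP => i; rewrite !inE => /andP[hio hi].
      have h1 := HB _ hi.
      have h2 : val i != k by apply: contra hio => /eqP h; apply/eqP/val_inj.
      have h3 : k != (val i).+1 by apply: (HA i o hi Hin).
      lia.
    rewrite (cardsD1 o I) Hin => h; rewrite add1n.
    by apply: leq_trans (leq_maxr _ _); rewrite ltnS.
  have h : #|I| <= Fk n P k.
    apply: leq_bigmax_cond; apply/andP; split; first by apply/nonadj_okP.
    apply/forall_inP => i hi.
    have h1 := HB _ hi.
    have h2 : val i != k by apply: contraNneq Hin => h; have -> : o = i by apply/val_inj.
    lia.
  by case: (P k) => //; apply: leq_trans h (leq_maxl _ _).
have Hm := Fk_mono n P (leqnSn k).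
case Pk: (P k) => //.
rewrite geq_max Hm /=.
pose A := [pred I : {set 'I_n} | nonadj_ok P I && [forall i in I, val i < k.-1]].
have hA : 0 < #|A|.
  apply/card_gt0P; exists set0; rewrite inE /=; apply/andP; split.
    by apply/nonadj_okP; split => i; rewrite inE.
  by apply/forall_inP => i; rewrite inE.
have [I0 HI0 HE] := eq_bigmax_cond (fun I : {set 'I_n} => #|I|) hA.
rewrite /Fk in HE *.
rewrite HE.
move: HI0; rewrite inE => /andP[/nonadj_okP[HP HA] /forall_inP HB].
have Hno : o \notin I0.
  by apply/negP => /HB /=; lia.
have -> : (#|I0|).+1 = #|o |: I0| by rewrite cardsU1 Hno.
apply: leq_bigmax_cond; apply/andP; split.
  apply/nonadj_okP; split.
    by move=> i; rewrite !inE => /orP[/eqP -> //|/HP].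
  move=> i j; rewrite !inE => /orP[/eqP ->|hi] /orP[/eqP ->|hj] /=.
  - lia.
  - have h : (j : nat) < k.-1 := HB _ hj; move: h; rewrite -subn1 => h; lia.
  - have h : (i : nat) < k.-1 := HB _ hi; move: h; rewrite -subn1 => h; lia.
  - exact: HA.
apply/forall_inP => i; rewrite !inE => /orP[/eqP -> //|/HB]; rewrite /=; lia.
Qed.

Lemma Fk_sum n P k : k <= n -> Fk n P k = \sum_(j < k) incf P j.
Proof.
suff H : k <= n -> Fk n P k = \sum_(j < k) incf P j /\
                   Fk n P k.-1 = \sum_(j < k.-1) incf P j by case/H.
elim: k => [|k IH] hk; first by rewrite !big_ord0 Fk0.
have [IH1 IH2] := IH (ltnW hk).
split; last by rewrite /= IH1.
rewrite Fk_step // big_ord_recr /= IH1.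
case: k IH IH1 IH2 hk => [|k] IH IH1 IH2 hk.
  by rewrite big_ord0 Fk0 /=; case: (P 0).
rewrite /= in IH2 *. rewrite IH2.
rewrite big_ord_recr /= in IH1 *.
case: (P k.+1) => /=; case: (incf P k) => /=; rewrite ?addn0 ?addn1 ?andbF ?andbT //=.
  by apply/maxn_idPl.
by apply/maxn_idPr.
Qed.

Lemma max_sum n (P : nat -> bool) : (forall k, P k -> k < n) ->
  \max_(I : {set 'I_n} | nonadj_ok P I) #|I| = \sum_(j < n) incf P j.
Proof.
move=> _; rewrite -(@Fk_sum n P n) //; apply: eq_bigl => I.
suff -> : [forall i in I, val i < n] by rewrite andbT.
by apply/forall_inP => i _; apply: ltn_ord.
Qed.

Definition gw n (pi : 'S_n) : seq bool := [seq is_asc pi k | k <- iota 0 n.-1].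

Lemma size_gw n (pi : 'S_n) : size (gw pi) = n.-1.
Proof. by rewrite size_map size_iota. Qed.

Lemma nth_gw n (pi : 'S_n) k x : k < n.-1 -> nth x (gw pi) k = is_asc pi k.
Proof. by move=> hk; rewrite (nth_map 0) ?size_iota // nth_iota. Qed.

Lemma nth_word n (pi : 'S_n) (i : 'I_n) : nth 0 (word pi) i = pi i.
Proof. by rewrite /word (nth_map i) ?size_enum_ord // nth_ord_enum. Qed.

Lemma is_asc_ord n (pi : 'S_n) (i j : 'I_n) :
  (j : nat) = i.+1 -> is_asc pi i = (pi i < pi j).
Proof. by move=> H; rewrite /is_asc -H ltn_ord /= !nth_word. Qed.

Lemma perm_neq n (pi : 'S_n) (i j : 'I_n) : i != j -> (pi i : nat) != pi j.
Proof.
by move=> h; apply: contra h => /eqP /val_inj /perm_inj ->.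
Qed.

Definition mm n (pi : 'S_n) : bool :=
  [forall i : 'I_n, [forall (j : 'I_n | i < j), pi i < pi j] || [forall (j : 'I_n | i < j), pi j < pi i]].

Lemma mm_cases n (pi : 'S_n) (i : 'I_n) : mm pi ->
  (forall j : 'I_n, i < j -> pi i < pi j) \/ (forall j : 'I_n, i < j -> pi j < pi i).
Proof.
by move/forallP/(_ i)/orP => [/forall_inP H|/forall_inP H]; [left|right].
Qed.

Ltac pat_tac :=
  let a := fresh "a" in let b := fresh "b" in
  let ha := fresh "ha" in let hb := fresh "hb" in
  apply/forallP => a; apply/forallP => b; rewrite !ffunE;
  case: a => [[|[|[|a]]] ha] //; case: b => [[|[|[|b]]] hb] //;
  rewrite /tnth /=; try (apply/andP; split); try apply/eqP; lia.

Lemma avoid_mm n (pi : 'S_n) :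
  avoids pi [:: 2; 1; 3] -> avoids pi [:: 2; 3; 1] -> mm pi.
Proof.
move=> A1 A2; apply/forallP => i; apply/negPn/negP; rewrite negb_or.
case/andP => /forallPn [j]; rewrite negb_imply => /andP[hij hj].
case/forallPn => [k]; rewrite negb_imply => /andP[hik hk].
have d1 := perm_neq pi (i := i) (j := j); have d2 := perm_neq pi (i := i) (j := k).
have {}d1 : (pi i : nat) != pi j by apply: d1; apply: contraTneq hij => ->; rewrite ltnn.
have {}d2 : (pi i : nat) != pi k by apply: d2; apply: contraTneq hik => ->; rewrite ltnn.
have hjk : nat_of_ord j != nat_of_ord k.
  by apply/eqP => /val_inj e; move: hj hk d1 d2; rewrite e; lia.
move: hjk; rewrite neq_ltn => /orP[] hjk2.
  move/negP: A1; apply; apply/existsP.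
  exists [ffun a : 'I_3 => tnth [tuple i; j; k] a]; pat_tac.
move/negP: A2; apply; apply/existsP.
exists [ffun a : 'I_3 => tnth [tuple i; k; j] a]; pat_tac.
Qed.

Lemma mm_avoid n (pi : 'S_n) : mm pi ->
  avoids pi [:: 2; 1; 3] && avoids pi [:: 2; 3; 1].
Proof.
move=> H; apply/andP; split; apply/negP => /existsP [f /forallP Hf].
  move: (Hf (@inord 2 0)) => /forallP /(_ (@inord 2 1)) /andP [h01 e01].
  move: (Hf (@inord 2 0)) => /forallP /(_ (@inord 2 2)) /andP [h02 e02].
  rewrite !inordK // /= in h01 e01 h02 e02.
  case: (mm_cases (f (@inord 2 0)) H) => C.
    by have := C _ h01; move: e01 => /eqP ->.
  by have h := C _ h02; move: e02; rewrite ltnNge (ltnW h).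
move: (Hf (@inord 2 0)) => /forallP /(_ (@inord 2 1)) /andP [h01 e01].
move: (Hf (@inord 2 0)) => /forallP /(_ (@inord 2 2)) /andP [h02 e02].
rewrite !inordK // /= in h01 e01 h02 e02.
case: (mm_cases (f (@inord 2 0)) H) => C.
  by have := C _ h02; move: e02 => /eqP ->.
by have h := C _ h01; move: e01; rewrite ltnNge (ltnW h).
Qed.
Definition lo (t : seq bool) k := \sum_(j < k) nth true t j.
Definition cn (t : seq bool) k := \sum_(j < k) ~~ nth true t j.
Definition valf n t k := if nth true t k then lo t k else n.-1 - cn t k.

Lemma lo_cn t k : lo t k + cn t k = k.
Proof.
rewrite /lo /cn -big_split /= (eq_bigr (fun _ => 1)).
  by rewrite sum1_card card_ord.
by move=> j _; case: nth.
Qed.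

Lemma lo_S t k : lo t k.+1 = lo t k + nth true t k.
Proof. by rewrite /lo big_ord_recr. Qed.
Lemma cn_S t k : cn t k.+1 = cn t k + ~~ nth true t k.
Proof. by rewrite /cn big_ord_recr. Qed.

Lemma sum_mono (F : nat -> nat) j k : j <= k -> \sum_(i < j) F i <= \sum_(i < k) F i.
Proof.
elim: k => [|k IH]; first by rewrite leqn0 => /eqP ->.
rewrite leq_eqVlt => /orP[/eqP -> //|/IH h].
by rewrite big_ord_recr /=; apply: leq_trans h (leq_addr _ _).
Qed.

Lemma valf_key n t j k : size t = n.-1 -> j < k -> k < n ->
  (nth true t j -> valf n t j < valf n t k) /\
  (~~ nth true t j -> valf n t k < valf n t j).
Proof.
move=> hs hjk hkn.
have e1 := lo_cn t k; have e2 := lo_cn t j.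
have m1 : lo t j.+1 <= lo t k by apply: (sum_mono (fun i => nth true t i : nat)).
have m2 : cn t j.+1 <= cn t k by apply: (sum_mono (fun i => ~~ nth true t i : nat)).
have l1 := lo_S t j; have c1 := cn_S t j.
rewrite /valf.
case: (nth true t j) l1 c1 => /= l1 c1; case: (nth true t k); split=> // _; lia.
Qed.

Lemma valf_lt n t k : k < n -> valf n t k < n.
Proof. by move=> hk; rewrite /valf; have := lo_cn t k; case: nth; lia. Qed.

Definition pf n t := [ffun i : 'I_n => insubd i (valf n t i)].

Lemma pf_val n t (i : 'I_n) : (pf n t i : nat) = valf n t i.
Proof. by rewrite ffunE insubdK //; apply: valf_lt. Qed.

Lemma pf_inj n t : size t = n.-1 -> injectiveb (pf n t).
Proof.
move=> hs; apply/injectiveP => i j e.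
have : valf n t i = valf n t j by rewrite -!pf_val e.
case: (ltngtP i j) => h.
- have [A B] := valf_key hs h (ltn_ord j); case: (nth true t i) A B => A B.
    by have := A isT; lia.
  by have := B isT; lia.
- have [A B] := valf_key hs h (ltn_ord i); case: (nth true t j) A B => A B.
    by have := A isT; lia.
  by have := B isT; lia.
- by move=> _; apply: val_inj.
Qed.

Definition pmk n (t : seq bool) : 'S_n := insubd (1%g : 'S_n) (pf n t).

Lemma pmkE n t (i : 'I_n) : size t = n.-1 -> (pmk n t i : nat) = valf n t i.
Proof.
move=> hs; rewrite -pvalE /pmk.
have := insubdK (1%g : 'S_n) (pf_inj hs) => /= ->.
exact: pf_val.
Qed.

Lemma pmk_mm n t : size t = n.-1 -> mm (pmk n t).
Proof.
move=> hs; apply/forallP => i; apply/orP.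
case b: (nth true t i); [left|right]; apply/forall_inP => j hij; rewrite !pmkE //;
  have [A B] := valf_key hs hij (ltn_ord j); [by apply: A; rewrite b | by apply: B; rewrite b].
Qed.

Lemma pmk_gw n t : size t = n.-1 -> gw (pmk n t) = t.
Proof.
move=> hs; apply: (@eq_from_nth _ false); first by rewrite size_gw hs.
rewrite size_gw => k hk.
have hk1 : k < n by lia.
have hk2 : k.+1 < n by lia.
rewrite nth_gw //.
have := is_asc_ord (pmk n t) (i := Ordinal hk1) (j := Ordinal hk2) erefl.
rewrite /= => ->; rewrite !pmkE //=.
have [A B] := valf_key hs (ltnSn k) hk2.
rewrite (set_nth_default true); last by rewrite hs.
case: (nth true t k) A B => A B; first by apply: A.
by have := B isT; lia.
Qed.

Lemma sum_lt n x : \sum_(v < n) (v < x) = minn n x.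
Proof.
elim: n => [|n IH]; first by rewrite big_ord0 min0n.
by rewrite big_ord_recr /= IH; lia.
Qed.

Lemma sum_gt n x : \sum_(v < n) (x < v) = n - minn n x.+1.
Proof.
elim: n => [|n IH]; first by rewrite big_ord0.
by rewrite big_ord_recr /= IH; lia.
Qed.

Lemma val_count n (pi : 'S_n) i : \sum_(j < n) (pi j < pi i) = pi i.
Proof.
have h := ltn_ord (pi i).
rewrite [RHS](_ : _ = minn n (pi i)); last by lia.
rewrite -sum_lt [RHS](reindex_inj (@perm_inj _ pi)) //.
Qed.

Lemma val_count2 n (pi : 'S_n) i : \sum_(j < n) (pi i < pi j) = n.-1 - pi i.
Proof.
have h := ltn_ord (pi i).
rewrite [RHS](_ : _ = n - minn n (pi i).+1); last by lia.
rewrite -sum_gt [RHS](reindex_inj (@perm_inj _ pi)) //.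
Qed.

Lemma sum_prefix n i (F : nat -> bool) : i <= n ->
  \sum_(j < n) ((j < i) && F j) = \sum_(j < i) F j.
Proof.
elim: n => [|n IH] hi.
  by move: hi; rewrite leqn0 => /eqP ->; rewrite !big_ord0.
case: (ltnP n i) => h.
  have -> : i = n.+1 by lia.
  by apply: eq_bigr => j _; rewrite ltn_ord.
by rewrite big_ord_recr /= IH // ltnNge h addn0.
Qed.

Lemma mm_val n (pi : 'S_n) (i : 'I_n) : mm pi -> (pi i : nat) = valf n (gw pi) i.
Proof.
move=> H; set t := gw pi.
have Hj : forall j : 'I_n, j < i -> (pi j < pi i) = nth true t j.
  move=> j hji.
  have hj : j < n.-1 by have := ltn_ord i; lia.
  have hj1 : j.+1 < n by have := ltn_ord i; lia.
  rewrite nth_gw // (@is_asc_ord _ pi j (Ordinal hj1)) //.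
  have d1 := perm_neq pi (i := i) (j := j).
  have d2 : (pi i : nat) != pi j by apply: d1; apply: contraTneq hji => ->; rewrite ltnn.
  have hjj : j < Ordinal hj1 by rewrite /= ltnSn.
  have d3 : (pi j : nat) != pi (Ordinal hj1).
    by apply: perm_neq; apply: contraTneq hjj => <-; rewrite ltnn.
  case: (mm_cases j H) => C.
    by have a := C _ hji; have b := C _ hjj; rewrite a b.
  have a := C _ hji; have b := C _ hjj.
  by rewrite ltnNge (ltnW a) ltnNge (ltnW b).
rewrite /valf; case b: (nth true t i).
  have Cmin : forall j : 'I_n, i < j -> pi i < pi j.
    case: (mm_cases i H) => // C.
    case: (ltnP i.+1 n) => hi1; last by move=> j hij; have := ltn_ord j; lia.
    move: b; rewrite nth_gw; last by lia.
    rewrite (@is_asc_ord _ pi i (Ordinal hi1)) //.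
    have := C (Ordinal hi1) (ltnSn _) => h.
    by rewrite ltnNge (ltnW h).
  rewrite -val_count /lo -(@sum_prefix n) //; last exact: ltnW.
  apply: eq_bigr => j _.
  case: (ltngtP j i) => h.
  - by rewrite Hj.
  - by have c := Cmin _ h; rewrite ltnNge (ltnW c).
  - have e : j = i by apply: val_inj.
    by rewrite e ltnn.
have hi : i < n.-1.
  by move: b; case: (ltnP i (size t)) => h; [rewrite size_gw in h|rewrite nth_default].
have hi1 : i.+1 < n by lia.
have Cmax : forall j : 'I_n, i < j -> pi j < pi i.
  case: (mm_cases i H) => // C.
  move: b; rewrite nth_gw // (@is_asc_ord _ pi i (Ordinal hi1)) //.
  by rewrite (C (Ordinal hi1) (ltnSn _)).
have h1 : (pi i : nat) <= n.-1 by have := ltn_ord (pi i); lia.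
have -> : cn t i = n.-1 - pi i.
  rewrite -val_count2 /cn -(@sum_prefix n i (fun j => ~~ nth true t j)) //; last exact: ltnW.
  apply: eq_bigr => j _.
  case: (ltngtP j i) => h.
  - rewrite -Hj //.
    have : (pi i : nat) != pi j by apply: perm_neq; apply: contraTneq h => ->; rewrite ltnn.
    rewrite neq_ltn; case/orP => c; first by rewrite c ltnNge (ltnW c).
    by rewrite c ltnNge (ltnW c).
  - by have c := Cmax _ h; rewrite ltnNge (ltnW c).
  - have e : j = i by apply: val_inj.
    by rewrite e ltnn.
lia.
Qed.

Lemma mm_pmk n (pi : 'S_n) : mm pi -> pi = pmk n (gw pi).
Proof.
move=> H; apply/permP => i; apply: val_inj => /=.
by rewrite pmkE ?size_gw // -mm_val.
Qed.

Lemma sum_incf_trunc (P : nat -> bool) m : P m = false ->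
  \sum_(j < m.+1) incf P j = \sum_(j < m) incf P j.
Proof.
move=> h; rewrite big_ord_recr /=.
by case E: (incf P m); [have := incf_P E; rewrite h | rewrite addn0].
Qed.

Definition Dp (t : seq bool) := fun k => (k < size t) && ~~ nth false t k.

Lemma is_asc_nth n (pi : 'S_n) k : is_asc pi k = nth false (gw pi) k.
Proof.
case: (ltnP k n.-1) => h; first by rewrite nth_gw.
rewrite nth_default ?size_gw // /is_asc.
by have -> : (k.+1 < n) = false by lia.
Qed.

Lemma is_des_asc n (pi : 'S_n) k : k < n.-1 -> is_des pi k = ~~ is_asc pi k.
Proof.
move=> hk.
have hk1 : k < n by lia.
have hk2 : k.+1 < n by lia.
have e1 := nth_word pi (Ordinal hk1); have e2 := nth_word pi (Ordinal hk2).
rewrite /= in e1 e2.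
rewrite /is_des /is_asc hk2 /= e1 e2.
have : (pi (Ordinal hk1) : nat) != pi (Ordinal hk2).
  by apply: perm_neq; apply/eqP => /(congr1 val) /= /eqP; rewrite eqn_leq ltnn andbF.
lia.
Qed.

Lemma is_des_D n (pi : 'S_n) k : is_des pi k = Dp (gw pi) k.
Proof.
rewrite /Dp size_gw; case: (ltnP k n.-1) => h.
  by rewrite is_des_asc // is_asc_nth.
by rewrite /is_des; have -> : (k.+1 < n) = false by lia.
Qed.

Lemma asc_gw n (pi : 'S_n) : asc pi = count id (gw pi).
Proof. by rewrite /asc /gw count_map. Qed.

Lemma des_gw n (pi : 'S_n) : des pi = count negb (gw pi).
Proof.
rewrite /des /gw count_map; apply: eq_in_count => k.
by rewrite mem_iota add0n => /andP[_ hk] /=; rewrite is_des_asc.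
Qed.

Lemma sum_n_trunc n (P : nat -> bool) : P n.-1 = false ->
  \sum_(j < n) incf P j = \sum_(j < n.-1) incf P j.
Proof. by case: n => [|n] //= h; rewrite sum_incf_trunc. Qed.

Lemma MNA_gw n (pi : 'S_n) :
  MNA pi = \sum_(k < size (gw pi)) incf (nth false (gw pi)) k.
Proof.
rewrite /MNA (@max_sum n) //; last by move=> k /andP[h _]; lia.
rewrite size_gw -sum_n_trunc; last first.
  by rewrite nth_default // size_gw.
apply: eq_bigr => k _; congr (nat_of_bool _); apply: incf_ext => j _; exact: is_asc_nth.
Qed.

Lemma MND_gw n (pi : 'S_n) :
  MND pi = \sum_(k < size (gw pi)) incf (Dp (gw pi)) k.
Proof.
rewrite /MND (@max_sum n) //; last by move=> k /andP[h _]; lia.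
rewrite size_gw -sum_n_trunc; last first.
  by rewrite /Dp size_gw ltnn.
apply: eq_bigr => k _; congr (nat_of_bool _); apply: incf_ext => j _; exact: is_des_D.
Qed.

Fixpoint allseq m : seq (seq bool) :=
  if m is m'.+1 then [seq rcons t b | t <- allseq m', b <- [:: true; false]]
  else [:: [::]].

Lemma mem_allseq m t : (t \in allseq m) = (size t == m).
Proof.
elim: m t => [|m IH] t; first by case: t.
apply/allpairsP/idP.
  by case=> [[t' b]] [/= h1 _ ->]; rewrite size_rcons eqSS -IH.
case/lastP: t => [|t' b] //; rewrite size_rcons eqSS => h.
by exists (t', b); rewrite /= IH h; split=> //; case: b.
Qed.

Lemma uniq_allseq m : uniq (allseq m).
Proof.
elim: m => [|m IH]; first by []. apply: allpairs_uniq => //.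
by move=> [t1 b1] [t2 b2] _ _ /= /rcons_inj.
Qed.

Import GRing.Theory.
Local Open Scope ring_scope.

Lemma partition_seq (I : finType) (T : eqType) (R : comNzRingType) (P : pred I)
  (g : I -> T) (s : seq T) (F : I -> R) :
  uniq s -> (forall i, P i -> g i \in s) ->
  \sum_(i | P i) F i = \sum_(x <- s) \sum_(i | P i && (g i == x)) F i.
Proof.
move=> us hs.
under [RHS]eq_bigr => x _ do rewrite big_mkcondr.
rewrite exchange_big /=; apply: eq_bigr => i Pi.
rewrite (bigD1_seq (g i)) ?hs //= eqxx big1 ?addr0 // => x.
by rewrite eq_sym => /negbTE ->.
Qed.

Section Weights.
Variables (R : comNzRingType) (p q y z : R).

Definition W (t : seq bool) : R :=
  p ^+ count id t * q ^+ count negb t *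
  y ^+ (\sum_(k < size t) incf (nth false t) k) *
  z ^+ (\sum_(k < size t) incf (Dp t) k).

Lemma Gcoef_seq n : Gcoef p q y z n = \sum_(t <- allseq n.-1) W t.
Proof.
rewrite /Gcoef.
under eq_bigr => pi _ do rewrite asc_gw des_gw MNA_gw MND_gw -/(W (gw pi)).
rewrite (@partition_seq _ _ _ _ (@gw n) (allseq n.-1)); first last.
- by move=> pi _; rewrite mem_allseq size_gw.
- exact: uniq_allseq.
apply: eq_big_seq => t; rewrite mem_allseq => /eqP hs.
rewrite (big_pred1 (pmk n t)) ?pmk_gw // => pi /=.
apply/idP/eqP.
  by case/andP => /andP[A1 A2] /eqP <-; apply: mm_pmk; apply: avoid_mm.
by move=> ->; rewrite mm_avoid ?pmk_mm //= pmk_gw // eqxx.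
Qed.

End Weights.

Lemma incfS P k : incf P k.+1 = P k.+1 && ~~ incf P k.
Proof. by []. Qed.

Lemma incfA_rcons t b k : (k < size t)%N ->
  incf (nth false (rcons t b)) k = incf (nth false t) k.
Proof.
by move=> hk; apply: incf_ext => j hj; rewrite nth_rcons (leq_ltn_trans hj hk).
Qed.

Lemma incfD_rcons t b k : (k < size t)%N ->
  incf (Dp (rcons t b)) k = incf (Dp t) k.
Proof.
move=> hk; apply: incf_ext => j hj; rewrite /Dp size_rcons nth_rcons.
have hj' := leq_ltn_trans hj hk.
have hj2 : (j < (size t).+1)%N by lia.
by rewrite hj' hj2.
Qed.

Lemma lastA t b k : size t = k.+1 ->
  incf (nth false (rcons t b)) k.+1 = b && ~~ incf (nth false t) k.
Proof.
move=> hs; rewrite incfS incfA_rcons ?hs // nth_rcons hs ltnn eqxx //.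
Qed.

Lemma lastD t b k : size t = k.+1 ->
  incf (Dp (rcons t b)) k.+1 = ~~ b && ~~ incf (Dp t) k.
Proof.
move=> hs; rewrite incfS incfD_rcons ?hs //.
by rewrite /Dp size_rcons hs ltnSn nth_rcons hs ltnn eqxx.
Qed.

Lemma count_rcons' (a : pred bool) t b : count a (rcons t b) = (count a t + a b)%N.
Proof. by rewrite -cats1 count_cat /= addn0. Qed.

Lemma sumA_rcons t b :
  (\sum_(k < size (rcons t b)) incf (nth false (rcons t b)) k =
   \sum_(k < size t) incf (nth false t) k + incf (nth false (rcons t b)) (size t))%N.
Proof.
rewrite size_rcons big_ord_recr /=; congr (_ + _)%N.
by apply: eq_bigr => k _; rewrite incfA_rcons.
Qed.

Lemma sumD_rcons t b :
  (\sum_(k < size (rcons t b)) incf (Dp (rcons t b)) k =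
   \sum_(k < size t) incf (Dp t) k + incf (Dp (rcons t b)) (size t))%N.
Proof.
rewrite size_rcons big_ord_recr /=; congr (_ + _)%N.
by apply: eq_bigr => k _; rewrite incfD_rcons.
Qed.

Definition st (t : seq bool) : bool * bool :=
  if size t is k.+1 then
    (nth false t k, if nth false t k then incf (nth false t) k else incf (Dp t) k)
  else (true, false).

Definition next (s : bool * bool) (b : bool) : bool * bool :=
  (b, if b then ~~ (s.1 && s.2) else ~~ (~~ s.1 && s.2)).

Lemma st_rcons t b : st (rcons t b) = next (st t) b.
Proof.
rewrite /st size_rcons nth_rcons ltnn eqxx.
case E: (size t) => [|k].
  by move/size0nil: E => ->; case: b.
rewrite lastA ?lastD //.
have ha : incf (nth false t) k -> nth false t k by move/incf_P.
have hd : incf (Dp t) k -> ~~ nth false t k by move/incf_P/andP=> [].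
rewrite /next /=.
case: b; case: (nth false t k) ha hd; case: (incf (nth false t) k);
  case: (incf (Dp t) k) => ha hd //=.
all: try by move: (hd isT).
all: try by move: (ha isT).
Qed.

Section Rec.
Variables (R : comNzRingType) (p q y z : R).

Definition fac (s : bool * bool) (b : bool) : R :=
  if b then p * (if s.1 && s.2 then 1 else y) else q * (if ~~ s.1 && s.2 then 1 else z).

Lemma W_rcons t b : W p q y z (rcons t b) = W p q y z t * fac (st t) b.
Proof.
rewrite /W sumA_rcons sumD_rcons !count_rcons' /fac /st.
case E: (size t) => [|k].
  move/size0nil: E => ->; rewrite /= !big_ord0.
  by case: b; rewrite /= !expr0 ?expr1 !mul1r ?mulr1.
rewrite lastA ?lastD //.
have ha : incf (nth false t) k -> nth false t k by move/incf_P.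
have hd : incf (Dp t) k -> ~~ nth false t k by move/incf_P/andP=> [].
move: (\sum_(k0 < k.+1) incf (nth false t) k0)%N => SA.
move: (\sum_(k0 < k.+1) incf (Dp t) k0)%N => SD.
case: b; case: (nth false t k) ha hd; case: (incf (nth false t) k);
  case: (incf (Dp t) k) => //= ha hd; rewrite ?addn0 ?addn1 ?exprS;
  try (by move: (hd isT)); try (by move: (ha isT)); ring.
Qed.

Definition ss : seq (bool * bool) := [:: (true, true); (true, false); (false, true); (false, false)].

Definition V m s := \sum_(t <- allseq m) ((st t == s)%:R * W p q y z t).
Definition T m := \sum_(t <- allseq m) W p q y z t.

Lemma regroup m (G : bool * bool -> R) :
  \sum_(t <- allseq m) G (st t) * W p q y z t = \sum_(s <- ss) G s * V m s.
Proof.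
rewrite /V; under [RHS]eq_bigr => s _ do rewrite big_distrr.
rewrite [RHS]exchange_big /=; apply: eq_bigr => t _.
rewrite /ss !big_cons big_nil.
by case: (st t) => [[] []]; rewrite /= ?mul1r ?mul0r ?mulr0 ?addr0 ?add0r ?mulrA.
Qed.

Lemma T_V m : T m = \sum_(s <- ss) V m s.
Proof.
rewrite /T -(eq_bigr _ (fun t _ => mul1r (W p q y z t))).
rewrite (regroup m (fun _ => 1)).
by apply: eq_bigr => s _; rewrite mul1r.
Qed.

Lemma V_S m s' : V m.+1 s' =
  \sum_(s <- ss) (\sum_(b <- [:: true; false]) (next s b == s')%:R * fac s b) * V m s.
Proof.
rewrite -regroup /V.
have -> : allseq m.+1 = [seq rcons t b | t <- allseq m, b <- [:: true; false]] by [].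
rewrite big_allpairs_dep; apply: eq_bigr => t _.
rewrite big_distrl; apply: eq_bigr => b _.
rewrite st_rcons W_rcons.
change ((next (st t) b == s')%:R * (W p q y z t * fac (st t) b) = ((next (st t) b == s')%:R * fac (st t) b) * W p q y z t); ring.
Qed.

Lemma T_rec m : T m.+3 = (p ^+ 2 * y + q ^+ 2 * z + p * q * y * z) * T m.+1
  + (p ^+ 2 * q * y * z + p * q ^+ 2 * y * z) * T m.
Proof.
rewrite !T_V /ss !big_cons !big_nil.
do 3 rewrite ?V_S /ss !big_cons !big_nil.
rewrite /fac /next /=.
ring.
Qed.

Lemma V0 s : V 0 s = (s == (true, false))%:R.
Proof.
rewrite /V /= big_cons big_nil /W /= !big_ord0 !expr0 !mulr1 addr0.
by rewrite eq_sym.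
Qed.

End Rec.

Section Final.
Variables (R : comNzRingType) (p q y z : R).

Lemma Gden_coef i : (Gden p q y z)`_i =
  if i == 0%N then 1 else if i == 2%N then - (p ^+ 2 * y + q ^+ 2 * z + p * q * y * z)
  else if i == 3%N then - (p ^+ 2 * q * y * z + p * q ^+ 2 * y * z) else 0.
Proof.
rewrite /Gden !coefB coef1 !coefCM !coefXn.
by case: i => [|[|[|[|i]]]] /=; rewrite ?mulr0 ?mulr1 ?subr0 ?sub0r ?subrr.
Qed.

Lemma Gnum_coef i : (Gnum p q y z)`_i =
  if i == 0%N then 1 else if i == 1%N then 1
  else if i == 2%N then p * y - p ^+ 2 * y + q * z - q ^+ 2 * z - p * q * y * z
  else if i == 3%N then p * q * y * z - p ^+ 2 * q * y * z - p * q ^+ 2 * y * z else 0.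
Proof.
rewrite /Gnum !coefD coef1 coefX !coefCM !coefXn.
by case: i => [|[|[|[|i]]]] /=; rewrite ?mulr0 ?mulr1 ?addr0 ?add0r.
Qed.

Lemma Gcoef_T n : Gcoef p q y z n = T p q y z n.-1.
Proof. by rewrite Gcoef_seq. Qed.

Lemma T0 : T p q y z 0 = 1.
Proof. by rewrite T_V /ss !big_cons big_nil !V0 /=; ring. Qed.

Lemma T1 : T p q y z 1 = p * y + q * z.
Proof.
rewrite T_V /ss !big_cons big_nil !V_S /ss !big_cons !big_nil !V0 /fac /next /=; ring.
Qed.

Lemma T2 : T p q y z 2 = p * y * (p + q * z) + q * z * (q + p * y).
Proof.
rewrite T_V /ss !big_cons big_nil.
do 2 rewrite ?V_S /ss !big_cons !big_nil.
rewrite !V0 /fac /next /=; ring.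
Qed.

End Final.

Theorem theorem8 (R : comNzRingType) (p q y z : R) (n : nat) :
  \sum_(i < n.+1) (Gden p q y z)`_i * Gcoef p q y z (n - i)%N = (Gnum p q y z)`_n.
Proof.
under eq_bigr => i _ do rewrite Gden_coef Gcoef_T.
rewrite Gnum_coef.
case: n => [|[|[|[|n]]]].
- by rewrite big_ord_recl big_ord0 /= T0; ring.
- by rewrite !big_ord_recl big_ord0 /= T0; ring.
- by rewrite !big_ord_recl big_ord0 /= T0 T1; ring.
- by rewrite !big_ord_recl big_ord0 /= T0 T2; ring.
rewrite 5!big_ord_recl /= big1; last first.
  by move=> i _; rewrite mul0r.
rewrite (T_rec p q y z n); ring.
Qed.
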